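(* Let $\mathscr{A}$ be a quiver over a nonempty set of vertices $\Lambda$ and let $\sigma\colon \mathscr{A}\otimes\mathscr{A}\to\mathscr{A}\otimes\mathscr{A}$, $\sigma(x,y)=(x\rightharpoonup y,\,x\leftharpoonup y)$, be an involutive left-non-degenerate quiver-theoretic Yang--Baxter map. For $x,y\in\mathscr{A}$ with $\mathfrak{s}(x)=\mathfrak{s}(y)$ put $x\star y:=(x\rightharpoonup\cdot)^{-1}(y)$. Let $j\colon\mathscr{A}\to\mathscr{C}(\sigma)$ send $s\in\mathscr{A}$ to the class of the length-one path $s$. Then $j$ is injective, and the structure category $\mathscr{C}(\sigma)$: (i) satisfies a quadratic isoperimetric inequality with respect to the presentation $\mathscr{C}(\sigma)=\langle \mathscr{A}\mid x|(x\star y)\sim y|(y\star x)\text{ for all }x\neq y\in\mathscr{A}\text{ with }\mathfrak{s}(x)=\mathfrak{s}(y)\rangle^+$; (ii) has no nontrivial invertible elements; (iii) is left-cancellative; (iv) admits unique conditional right-lcms, and the complementation is given by $\star$, i.e. for distinct $x,y\in\mathscr{A}$ with the same source, $j(x)j(x\star y)=j(y)j(y\star x)$ is the right-lcm of $j(x)$ and $j(y)$; (v) is Noetherian; (vi) has as atoms exactly the elements of $j(\mathscr{A})$; (vii) has a Garside family $E$ given by the closure of $j(\mathscr{A})$ under right-lcms, and $E$ is the smallest Garside family of $\mathscr{C}(\sigma)$ containing $j(\mathscr{A})$ and all identity elements.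
   Context: A quiver over $\Lambda$ is a set $\mathscr{A}$ of arrows with source and target maps $\mathfrak{s},\mathfrak{t}\colon\mathscr{A}\to\Lambda$; $\mathscr{A}(\lambda,\Lambda)$ denotes the arrows with source $\lambda$ and $\mathscr{A}(\Lambda,\mu)$ those with target $\mu$. $\mathscr{A}\otimes\mathscr{A}$ is the quiver of composable pairs $(x,y)$ (written $x|y$), $\mathfrak{t}(x)=\mathfrak{s}(y)$, with source $\mathfrak{s}(x)$ and target $\mathfrak{t}(y)$; a morphism of quivers over $\Lambda$ preserves sources and targets. A (quiver-theoretic) Yang--Baxter map is a morphism $\sigma\colon\mathscr{A}\otimes\mathscr{A}\to\mathscr{A}\otimes\mathscr{A}$ of quivers over $\Lambda$ with $(\sigma\otimes\mathrm{id})(\mathrm{id}\otimes\sigma)(\sigma\otimes\mathrm{id})=(\mathrm{id}\otimes\sigma)(\sigma\otimes\mathrm{id})(\mathrm{id}\otimes\sigma)$ on composable triples. It is involutive if $\sigma^2=\mathrm{id}$, and left-non-degenerate if for every $x$ the map $x\rightharpoonup\cdot\colon\mathscr{A}(\mathfrak{t}(x),\Lambda)\to\mathscr{A}(\mathfrak{s}(x),\Lambda)$ is bijective. The structure category $\mathscr{C}(\sigma)$ is the category presented by generators $\mathscr{A}$ and relations $x|y\sim(x\rightharpoonup y)|(x\leftharpoonup y)$ for all composable $x|y$, i.e. the path category of $\mathscr{A}$ modulo the congruence generated by these relations (composition written left to right). In a category, $x$ left-divides $y$ if $y=xz$; a right-lcm of $x,y$ is a common right-multiple $xu=yv$ left-dividing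 every common right-multiple; conditional right-lcms means any two elements with a common right-multiple have a right-lcm. An atom is an element which in every factorization has exactly one non-invertible factor. Noetherian: the proper factor relation ($x\subset y$ iff $y=y'xy''$ with $y'$ or $y''$ non-invertible) is well-founded. A presentation satisfies a quadratic isoperimetric inequality if there is a constant $C$ such that any two paths of lengths $r,s$ representing the same element are connected by at most $C(r+s)^2$ elementary steps each replacing a subpath by the other side of a relation. For a left-cancellative category $\mathscr{C}$ and a subfamily $\mathscr{S}$, let $\mathscr{S}^\sharp=\mathscr{S}\mathscr{C}^\times\cup\mathscr{C}^\times$ ($\mathscr{C}^\times$ the invertible elements); a path $x|y$ is $\mathscr{S}$-greedy if for all $s\in\mathscr{S}$ and $c$ with $\mathfrak{t}(c)=\mathfrak{s}(x)$, $s$ left-divides $cxy$ implies $s$ left-divides $cx$; a path $x_1|\dots|x_r$ is $\mathscr{S}$-normal if all $x_i|x_{i+1}$ are $\mathscr{S}$-greedy and all $x_i\in\mathscr{S}^\sharp$; $\mathscr{S}$ is a Garside family if every element of $\mathscr{C}$ is a product $x_1\cdots x_r$ with $x_1|\dots|x_r$ $\mathscr{S}$-normal. *)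

(* Defs.v *)
From Stdlib Require Import Relations.
From Stdlib Require List.
From mathcomp Require Import all_boot.

Set Implicit Arguments.
Unset Strict Implicit.
Unset Printing Implicit Defensive.

(* A quiver over the vertex set [vert] with arrows [arr], source/target maps,
   together with a map sigma(x,y) = (lft x y, rgt x y) on composable pairs
   (lft x y = x ⇀ y, rgt x y = x ↼ y).  Values of lft/rgt on non-composable
   pairs are irrelevant: every hypothesis and conclusion only uses them on
   composable pairs. *)
Record qsys := QSys {
  vert : Type;
  arr : Type;
  src : arr -> vert;
  tgt : arr -> vert;
  lft : arr -> arr -> arr;
  rgt : arr -> arr -> arr
}.

Section Defs.
Variable X : qsys.
Local Notation V := (vert X).
Local Notation A := (arr X).
Local Notation src := (@src X).
Local Notation tgt := (@tgt X).
Local Notation lft := (@lft X).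
Local Notation rgt := (@rgt X).

Definition sigma_quiver_morphism : Prop :=
  forall x y, tgt x = src y ->
    [/\ src (lft x y) = src x, tgt (lft x y) = src (rgt x y)
      & tgt (rgt x y) = tgt y].

Definition s1 (t : A * A * A) : A * A * A :=
  let: (a, b, c) := t in (lft a b, rgt a b, c).
Definition s2 (t : A * A * A) : A * A * A :=
  let: (a, b, c) := t in (a, lft b c, rgt b c).

Definition braid_relation : Prop :=
  forall x y z, tgt x = src y -> tgt y = src z ->
    s1 (s2 (s1 (x, y, z))) = s2 (s1 (s2 (x, y, z))).

Definition yang_baxter_map : Prop :=
  sigma_quiver_morphism /\ braid_relation.

Definition yb_involutive : Prop :=
  forall x y, tgt x = src y ->
    lft (lft x y) (rgt x y) = x /\ rgt (lft x y) (rgt x y) = y.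

Definition left_nondegenerate : Prop :=
  forall x,
    (forall y1 y2, src y1 = tgt x -> src y2 = tgt x ->
       lft x y1 = lft x y2 -> y1 = y2) /\
    (forall z, src z = src x -> exists y, src y = tgt x /\ lft x y = z).

Definition star_spec (star : A -> A -> A) : Prop :=
  forall x y, src x = src y -> src (star x y) = tgt x /\ lft x (star x y) = y.

Definition qpath := (V * seq A)%type.

Fixpoint valid_from (v : V) (s : seq A) : Prop :=
  match s with
  | [::] => True
  | x :: s' => src x = v /\ valid_from (tgt x) s'
  end.

Fixpoint end_from (v : V) (s : seq A) : V :=
  match s with
  | [::] => v
  | x :: s' => end_from (tgt x) s'
  end.

Definition pvalid (p : qpath) : Prop := valid_from p.1 p.2.
Definition psrc (p : qpath) : V := p.1.
Definition ptgt (p : qpath) : V := end_from p.1 p.2.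
Definition plen (p : qpath) : nat := size p.2.
Definition pcat (p q : qpath) : qpath := (p.1, p.2 ++ q.2).
Definition idp (v : V) : qpath := (v, [::]).
Definition jmap (s : A) : qpath := (src s, [:: s]).

Definition rstep (p q : qpath) : Prop :=
  pvalid p /\ exists a b x y, tgt x = src y /\ p.2 = a ++ x :: y :: b /\
    q = (p.1, a ++ lft x y :: rgt x y :: b).

(* equality in the structure category C(sigma): congruence generated by the
   relations, on valid paths *)
Definition ceq (p q : qpath) : Prop :=
  pvalid p /\ clos_refl_sym_trans qpath rstep p q.

Definition ldiv (a b : qpath) : Prop :=
  exists z, ptgt a = psrc z /\ ceq (pcat a z) b.

Definition invertible (p : qpath) : Prop :=
  pvalid p /\ exists q, ptgt p = psrc q /\ ptgt q = psrc p /\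
    ceq (pcat p q) (idp (psrc p)) /\ ceq (pcat q p) (idp (ptgt p)).

Definition is_rlcm (c a b : qpath) : Prop :=
  [/\ ldiv a c, ldiv b c & forall d, ldiv a d -> ldiv b d -> ldiv c d].

Definition conditional_rlcms : Prop :=
  forall a b d, ldiv a d -> ldiv b d -> exists c, is_rlcm c a b.

Definition unique_rlcms : Prop :=
  forall a b c c', is_rlcm c a b -> is_rlcm c' a b -> ceq c c'.

Definition left_cancellative : Prop :=
  forall a b c, ptgt a = psrc b -> ptgt a = psrc c ->
    ceq (pcat a b) (pcat a c) -> ceq b c.

Definition proper_factor (x y : qpath) : Prop :=
  pvalid x /\ exists y' y'', pvalid y' /\ pvalid y'' /\
    ptgt y' = psrc x /\ ptgt x = psrc y'' /\
    ceq (pcat (pcat y' x) y'') y /\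
    (~ invertible y' \/ ~ invertible y'').

Definition noetherian : Prop := well_founded proper_factor.

Fixpoint chained (fs : seq qpath) : Prop :=
  match fs with
  | f :: ((g :: _) as fs') => ptgt f = psrc g /\ chained fs'
  | _ => True
  end.

Fixpoint adj_all (R : qpath -> qpath -> Prop) (fs : seq qpath) : Prop :=
  match fs with
  | f :: ((g :: _) as fs') => R f g /\ adj_all R fs'
  | _ => True
  end.

Definition product_is (fs : seq qpath) (p : qpath) : Prop :=
  exists f fs', fs = f :: fs' /\ ceq (f.1, flatten (map snd fs)) p.

Definition factorization (p : qpath) (fs : seq qpath) : Prop :=
  List.Forall pvalid fs /\ chained fs /\ product_is fs p.

Definition is_atom (p : qpath) : Prop :=
  pvalid p /\ forall fs, factorization p fs ->
    exists i, (exists f, List.nth_error fs i = Some f /\ ~ invertible f) /\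
      forall j g, j <> i -> List.nth_error fs j = Some g -> invertible g.

Definition qfamily := qpath -> Prop.

Definition family_of_elements (S : qfamily) : Prop :=
  forall p q, ceq p q -> S p -> S q.

Definition Ssharp (S : qfamily) (p : qpath) : Prop :=
  invertible p \/
  exists s e, S s /\ invertible e /\ ptgt s = psrc e /\ ceq (pcat s e) p.

Definition greedy (S : qfamily) (x y : qpath) : Prop :=
  forall s c, S s -> pvalid c -> ptgt c = psrc x ->
    ldiv s (pcat (pcat c x) y) -> ldiv s (pcat c x).

Definition s_normal (S : qfamily) (fs : seq qpath) : Prop :=
  List.Forall pvalid fs /\ chained fs /\ List.Forall (Ssharp S) fs /\
  adj_all (greedy S) fs.

Definition garside (S : qfamily) : Prop :=
  forall p, pvalid p -> exists fs, fs <> [::] /\ s_normal S fs /\ product_is fs p.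

Inductive Ecl : qpath -> Prop :=
| Ecl_gen s p : ceq p (jmap s) -> Ecl p
| Ecl_id v p : ceq p (idp v) -> Ecl p
| Ecl_lcm a b c : Ecl a -> Ecl b -> is_rlcm c a b -> Ecl c.

Section Pres.
Variable star : A -> A -> A.

Definition step2 (p q : qpath) : Prop :=
  pvalid p /\ exists a b x y, x <> y /\ src x = src y /\
    p.2 = a ++ x :: star x y :: b /\ q = (p.1, a ++ y :: star y x :: b).

End Pres.

Inductive nsteps (R : qpath -> qpath -> Prop) : nat -> qpath -> qpath -> Prop :=
| nsteps0 p : nsteps R 0 p p
| nstepsS n p r q : (R p r \/ R r p) -> nsteps R n r q -> nsteps R n.+1 p q.

End Defs.

(* Main.v *)
Require Import Defs.
From HB Require Import structures.
From Stdlib Require Import Relations ClassicalEpsilon Wf_nat Wellfounded.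
From Stdlib Require List.
From mathcomp Require Import all_boot zify.
Set Implicit Arguments. Unset Strict Implicit. Unset Printing Implicit Defensive.

Definition arr_eqb (X : qsys) (x y : arr X) : bool :=
  if excluded_middle_informative (x = y) then true else false.
Lemma arr_eqP (X : qsys) : Equality.axiom (@arr_eqb X).
Proof. move=> x y; rewrite /arr_eqb; case: excluded_middle_informative => h; constructor => //. Qed.
HB.instance Definition _ (X : qsys) := hasDecEq.Build (arr X) (@arr_eqP X).

Section Model.
Variable X : qsys.
Local Notation V := (vert X).
Local Notation A := (arr X).
Local Notation src := (@src X).
Local Notation tgt := (@tgt X).
Local Notation lft := (@lft X).
Local Notation rgt := (@rgt X).
Local Notation qp := (qpath X).
Local Notation valid_from := (@valid_from X).
Local Notation end_from := (@end_from X).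
Local Notation ceq := (@ceq X).
Local Notation pvalid := (@pvalid X).
Local Notation rstep := (@rstep X).
Local Notation ldiv := (@ldiv X).
Local Notation invertible := (@invertible X).
Local Notation is_rlcm := (@is_rlcm X).

Fixpoint act (xs : seq A) (z : A) : A := if xs is x :: xs' then lft x (act xs' z) else z.
Fixpoint Yl (xs : seq A) : seq A :=
  if xs is x :: xs' then x :: map (lft x) (Yl xs') else [::].

Lemma size_Yl xs : size (Yl xs) = size xs.
Proof. by elim: xs => //= x xs IH; rewrite size_map IH. Qed.

Lemma Yl_cat xs zs : Yl (xs ++ zs) = Yl xs ++ map (act xs) (Yl zs).
Proof. elim: xs => //= [|x xs IH]; first by rewrite map_id. by rewrite IH map_cat -map_comp. Qed.

Lemma valid_cat v a b : valid_from v (a ++ b) <-> valid_from v a /\ valid_from (end_from v a) b.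
Proof.
elim: a v => [|x a IH] v /=; first by tauto.
rewrite IH; tauto.
Qed.

Lemma end_cat v a b : end_from v (a ++ b) = end_from (end_from v a) b.
Proof. by elim: a v => //= x a IH v. Qed.

Hypothesis HM : sigma_quiver_morphism X.
Hypothesis HB : braid_relation X.
Hypothesis HI : yb_involutive X.
Hypothesis HL : left_nondegenerate X.
Variable star : A -> A -> A.
Hypothesis HS : star_spec star.

Lemma lft_inj x y1 y2 : src y1 = tgt x -> src y2 = tgt x -> lft x y1 = lft x y2 -> y1 = y2.
Proof. exact: (HL x).1. Qed.
Lemma star_src x y : src x = src y -> src (star x y) = tgt x.
Proof. by move=> h; case: (HS h). Qed.
Lemma lft_star x y : src x = src y -> lft x (star x y) = y.
Proof. by move=> h; case: (HS h). Qed.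
Lemma lft_src x y : tgt x = src y -> src (lft x y) = src x.
Proof. by move=> h; case: (HM h). Qed.
Lemma lft_tgt x y : tgt x = src y -> tgt (lft x y) = src (rgt x y).
Proof. by move=> h; case: (HM h). Qed.
Lemma rgt_tgt x y : tgt x = src y -> tgt (rgt x y) = tgt y.
Proof. by move=> h; case: (HM h). Qed.
Lemma star_lft x y : src y = tgt x -> star x (lft x y) = y.
Proof.
move=> h; have e : src x = src (lft x y) by rewrite lft_src.
apply: (lft_inj (star_src e) h); exact: lft_star.
Qed.
Lemma braid1 x y z : tgt x = src y -> tgt y = src z ->
  lft x (lft y z) = lft (lft x y) (lft (rgt x y) z).
Proof.
move=> h1 h2; have := HB h1 h2; rewrite /s1 /s2 /=.
by move/(congr1 (fun t => t.1.1)) => /= ->.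
Qed.
Lemma invol1 x y : tgt x = src y -> lft (lft x y) (rgt x y) = x.
Proof. by move=> h; case: (HI h). Qed.
Lemma invol2 x y : tgt x = src y -> rgt (lft x y) (rgt x y) = y.
Proof. by move=> h; case: (HI h). Qed.

Lemma act_src v xs z : valid_from v xs -> src z = end_from v xs -> src (act xs z) = v.
Proof.
elim: xs v => //= x xs IH v [hx hv] hz.
by rewrite lft_src // (IH _ hv hz).
Qed.

Lemma Yl_src v xs y : valid_from v xs -> y \in Yl xs -> src y = v.
Proof.
elim: xs v y => //= x xs IH v y [hx hv]; rewrite inE => /orP [/eqP -> //|/mapP [w hw ->]].
by rewrite lft_src // (IH _ _ hv hw).
Qed.

Lemma act_inj v xs z1 z2 : valid_from v xs -> src z1 = end_from v xs -> src z2 = end_from v xs ->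
  act xs z1 = act xs z2 -> z1 = z2.
Proof.
elim: xs v => //= x xs IH v [hx hv] h1 h2 e.
apply: (IH _ hv h1 h2); apply: (lft_inj _ _ e); exact: act_src.
Qed.

Fixpoint invact (xs : seq A) (w : A) : A :=
  if xs is x :: xs' then invact xs' (star x w) else w.

Lemma invact_src v xs w : valid_from v xs -> src w = v -> src (invact xs w) = end_from v xs.
Proof.
elim: xs v w => //= x xs IH v w [hx hv] hw.
apply: IH => //; apply: star_src; congruence.
Qed.

Lemma act_invact v xs w : valid_from v xs -> src w = v -> act xs (invact xs w) = w.
Proof.
elim: xs v w => //= x xs IH v w [hx hv] hw.
rewrite (IH (tgt x)) //; first (apply: lft_star; congruence).
apply: star_src; congruence.
Qed.

Lemma invact_act v xs z : valid_from v xs -> src z = end_from v xs -> invact xs (act xs z) = z.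
Proof.
move=> hv hz; apply: (act_inj hv) => //; last apply: (act_invact hv).
- apply: invact_src => //; exact: act_src.
- exact: act_src.
Qed.

Lemma Yl_inj v xs1 xs2 : valid_from v xs1 -> valid_from v xs2 -> Yl xs1 = Yl xs2 -> xs1 = xs2.
Proof.
elim: xs1 v xs2 => [|x1 xs1 IH] v [|x2 xs2] //= [h1 v1] [h2 v2] [ex e]; subst x2.
congr cons; apply: (IH (tgt x1)) => //.
have E l (vl : valid_from (tgt x1) l) : map (star x1) (map (lft x1) (Yl l)) = Yl l.
  rewrite -map_comp -[RHS]map_id; apply/eq_in_map => y hy /=.
  apply: star_lft; exact: (Yl_src vl hy).
by rewrite -(E _ v1) -(E _ v2) e.
Qed.

Lemma Yl_surj v ys : (forall y, y \in ys -> src y = v) -> exists xs, valid_from v xs /\ Yl xs = ys.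
Proof.
elim/last_ind: ys => [|ys y IH] h; first by exists [::].
case: IH => [w hw|xs [hv he]]; first by apply: h; rewrite mem_rcons inE hw orbT.
have hy : src y = v by apply: h; rewrite mem_rcons mem_head.
exists (xs ++ [:: invact xs y]); split.
  apply/valid_cat; split => //=; split => //; exact: invact_src.
by rewrite Yl_cat he /= (act_invact hv hy) cats1.
Qed.


Lemma perm_swap2 (a : seq A) (f : A -> A) u w T :
  perm_eq (a ++ map f (u :: w :: T)) (a ++ map f (w :: u :: T)).
Proof. by rewrite perm_cat2l /= (perm_catCA [:: f u] [:: f w]). Qed.

Lemma step_at a x y b v : valid_from v (a ++ x :: y :: b) ->
  [/\ valid_from v (a ++ lft x y :: rgt x y :: b),
      Yl (a ++ x :: y :: b) = Yl a ++ map (act a) (x :: lft x y :: map (lft x \o lft y) (Yl b))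
    & Yl (a ++ lft x y :: rgt x y :: b) = Yl a ++ map (act a) (lft x y :: x :: map (lft x \o lft y) (Yl b))].
Proof.
move/valid_cat => [va /= [hx [hxy vb]]].
have hxy' : tgt x = src y by [].
split.
- apply/valid_cat; split => //=; split; first by rewrite lft_src.
  by split; [rewrite lft_tgt | rewrite rgt_tgt].
- by rewrite !Yl_cat /= map_comp.
- rewrite !Yl_cat /= invol1 //; congr (_ ++ map _ (_ :: _ :: _)).
  rewrite -map_comp; apply/eq_in_map => z hz /=.
  by have hz2 := Yl_src vb hz; rewrite -braid1.
Qed.

Lemma rstep_inv p q : rstep p q -> [/\ pvalid p, pvalid q, p.1 = q.1 & perm_eq (Yl p.2) (Yl q.2)].
Proof.
case=> vp [a [b [x [y [hxy [ep ->]]]]]].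
move: vp; rewrite /pvalid ep => vp.
case: (step_at vp) => vq e1 e2; split => //=.
by rewrite e1 e2 perm_swap2.
Qed.

Lemma crst_inv p q : clos_refl_sym_trans _ rstep p q ->
  [/\ pvalid p <-> pvalid q, p.1 = q.1 & perm_eq (Yl p.2) (Yl q.2)].
Proof.
elim => {p q}.
- by move=> p q /rstep_inv [].
- by move=> p; split.
- by move=> p q _ [h1 h2 h3]; split => //; [tauto | rewrite perm_sym].
- move=> p q r _ [h1 h2 h3] _ [h1' h2' h3']; split; [tauto|congruence|exact: perm_trans h3'].
Qed.

Lemma ceq_inv p q : ceq p q -> [/\ pvalid p, pvalid q, p.1 = q.1 & perm_eq (Yl p.2) (Yl q.2)].
Proof. by case=> vp /crst_inv [h1 h2 h3]; split => //; apply/h1. Qed.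

Lemma ceq_refl p : pvalid p -> ceq p p.
Proof. by move=> vp; split => //; apply: rst_refl. Qed.

Lemma ceq_sym p q : ceq p q -> ceq q p.
Proof. move=> h; case: (ceq_inv h) => _ vq _ _; split => //; apply: rst_sym; exact: h.2. Qed.

Lemma ceq_trans p q r : ceq p q -> ceq q r -> ceq p r.
Proof. move=> [vp h1] [_ h2]; split => //; exact: rst_trans h1 h2. Qed.

Lemma ceq_size p q : ceq p q -> size p.2 = size q.2.
Proof. by case/ceq_inv => _ _ _ /perm_size; rewrite !size_Yl. Qed.

Lemma step2_rstep p q : step2 star p q -> rstep p q.
Proof.
case=> vp [a [b [x [y [nxy [sxy [ep ->]]]]]]].
split => //; exists a, b, x, (star x y); split; first by rewrite star_src.
have hs : tgt x = src (star x y) by rewrite star_src.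
have e : rgt x (star x y) = star y x.
  apply: (@lft_inj y); first by rewrite -(lft_tgt hs) lft_star.
    by rewrite star_src.
  by rewrite -{1}(lft_star sxy) invol1 // lft_star.
by split => //; rewrite lft_star // e.
Qed.

Lemma rstep_step2 p q : rstep p q -> p = q \/ step2 star p q.
Proof.
case=> vp [a [b [x [y [hxy [ep eq]]]]]].
have sl : src (lft x y) = src x by rewrite lft_src.
case: (excluded_middle_informative (lft x y = x)) => e.
- have sr : src (rgt x y) = tgt x by rewrite -(lft_tgt hxy) e.
  left; have er : rgt x y = y.
    apply: (@lft_inj x); [done | by rewrite hxy | by rewrite -{1}e invol1 // e].
  by rewrite eq e er -ep; case: (p).
- right; split => //; exists a, b, x, (lft x y); split; first by move=> h; apply: e.
  split; first by [].
  have ey : star x (lft x y) = y by rewrite star_lft.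
  split; first by rewrite ey.
  rewrite eq; congr (_, _ ++ _ :: _ :: _).
  have h1 : src (star (lft x y) x) = tgt (lft x y) by rewrite star_src.
  apply: (@lft_inj (lft x y)) => //; first by rewrite lft_tgt.
  by rewrite invol1 // lft_star.
Qed.


Inductive swn : nat -> seq A -> seq A -> Prop :=
| swn0 l : swn 0 l l
| swnS n L1 u w L2 l' : swn n (L1 ++ w :: u :: L2) l' -> swn n.+1 (L1 ++ u :: w :: L2) l'.

Lemma swn_trans n m l1 l2 l3 : swn n l1 l2 -> swn m l2 l3 -> swn (n + m) l1 l3.
Proof. by elim=> {n l1 l2} // n L1 u w L2 l' _ IH /IH h; apply: swnS. Qed.

Lemma swn_cons n l l' b : swn n l l' -> swn n (b :: l) (b :: l').
Proof.
elim=> {n l l'}; first by constructor.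
by move=> n L1 u w L2 l' _ IH; apply: (@swnS _ (b :: L1)).
Qed.

Lemma swn_front l1 a l2 : swn (size l1) (l1 ++ a :: l2) (a :: l1 ++ l2).
Proof.
elim: l1 => [|b l1 IH] /=; first by constructor.
rewrite -addn1; apply: swn_trans; first exact: swn_cons IH.
by apply: (@swnS _ [::]); constructor.
Qed.

Lemma perm_swn l l' : perm_eq l l' -> exists k, k <= (size l) ^ 2 /\ swn k l l'.
Proof.
elim: l' l => [|a l' IH] l.
  by move/perm_size; case: l => // _; exists 0; split => //; constructor.
move=> hp; have ha : a \in l by rewrite (perm_mem hp) mem_head.
move: hp; case/splitPr: ha => l1 l2 hp.
have hp' : perm_eq (l1 ++ l2) l'.
  rewrite -(perm_cons a); apply: perm_trans hp; by rewrite -cat1s perm_catCA.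
case: (IH _ hp') => k [hk hs].
exists (size l1 + k); split; last exact: swn_trans (swn_front _ _ _) (swn_cons _ hs).
move: hk; rewrite !size_cat /= -!mulnn; nia.
Qed.

Definition nle k (p q : qp) := exists k', k' <= k /\ nsteps (step2 star) k' p q.

Lemma nle_step k p r q : (p = r \/ step2 star p r) -> nle k r q -> nle k.+1 p q.
Proof.
move=> [->|h] [k' [hk hn]]; first by exists k'; split => //; apply: leqW.
by exists k'.+1; split => //; apply: nstepsS hn; left.
Qed.

Lemma swn_lift k l l' : swn k l l' -> forall p, pvalid p -> Yl p.2 = l ->
  exists q, [/\ pvalid q, q.1 = p.1, Yl q.2 = l' & nle k p q].
Proof.
elim=> {k l l'}.
  move=> l p vp e; exists p; split => //; exists 0; split => //; constructor.
move=> n L1 u w L2 l' _ IH p vp e.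
set a := take (size L1) p.2; set r := drop (size L1) p.2.
have ep : p.2 = a ++ r by rewrite cat_take_drop.
have hs : size L1 <= size p.2 by rewrite -(size_Yl p.2) e size_cat leq_addr.
have sa : size (Yl a) = size L1 by rewrite size_Yl size_take_min; apply/minn_idPl.
move: e; rewrite ep Yl_cat => /eqP; rewrite eqseq_cat // => /andP [/eqP ea /eqP er].
move: er; case er': r => [|x [|y b]] //= [ex [ey eL]].
have vp' : valid_from p.1 (a ++ x :: y :: b) by rewrite -er' -ep.
case: (step_at vp') => vq e1 e2.
have hxy : tgt x = src y.
  by move: vp'; case/valid_cat => _ /= [_ []].
set q := (p.1, a ++ lft x y :: rgt x y :: b).
have rq : rstep p q.
  by split => //; exists a, b, x, y; split => //; split => //; rewrite ep er'.
case: (IH q vq) => [|q' [vq' e1' e2' hn]].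
  rewrite /q /= e2 ea /= ex; congr (_ ++ _ :: _ :: _).
  - exact: ey.
  - by rewrite -eL map_comp.
exists q'; split => //.
apply: nle_step hn; exact: rstep_step2.
Qed.

Lemma nsteps_crst k p q : nsteps (step2 star) k p q -> clos_refl_sym_trans _ rstep p q.
Proof.
elim=> {k p q}; first by move=> p; apply: rst_refl.
move=> n p r q [h|h] _ IH; apply: rst_trans IH.
  by apply: rst_step; apply: step2_rstep.
by apply: rst_sym; apply: rst_step; apply: step2_rstep.
Qed.

Lemma perm_ceq_n (p q : qp) : pvalid p -> pvalid q -> p.1 = q.1 -> perm_eq (Yl p.2) (Yl q.2) ->
  nle ((size p.2) ^ 2) p q.
Proof.
move=> vp vq e hp; case: (perm_swn hp) => k [hk hs].
case: (swn_lift hs vp erefl) => q' [vq' e1 e2 [k' [hk' hn]]].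
have eq : q' = q.
  have e3 : q'.1 = q.1 by rewrite e1.
  have e4 : q'.2 = q.2.
    apply: (Yl_inj (v := q.1)) => //; by rewrite -e3; exact: vq'.
  by move: e3 e4; case: (q') => ? ?; case: (q) => ? ? /= -> ->.
subst q'; exists k'; split => //; apply: leq_trans hk' (leq_trans hk _).
by rewrite size_Yl.
Qed.

Lemma perm_ceq (p q : qp) : pvalid p -> pvalid q -> p.1 = q.1 -> perm_eq (Yl p.2) (Yl q.2) ->
  ceq p q.
Proof.
move=> vp vq e hp; case: (perm_ceq_n vp vq e hp) => k [_ hn].
split => //; exact: nsteps_crst hn.
Qed.

Lemma ceq_iff (p q : qp) : ceq p q <-> [/\ pvalid p, pvalid q, p.1 = q.1 & perm_eq (Yl p.2) (Yl q.2)].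
Proof. split; [exact: ceq_inv | by case; apply: perm_ceq]. Qed.


Definition msub (M N : seq A) := forall x, count_mem x M <= count_mem x N.

Lemma perm_cnt (s t : seq A) x : perm_eq s t -> count_mem x s = count_mem x t.
Proof. by move/permP => h; exact: h. Qed.

Lemma cnt_perm (s t : seq A) : (forall x, count_mem x s = count_mem x t) -> perm_eq s t.
Proof. by move=> h; apply/allP => x _; apply/eqP; exact: h. Qed.

Lemma msub_ex M N : msub M N -> exists R, perm_eq N (M ++ R).
Proof.
elim: M N => [|a M IH] N h; first by exists N.
have ha : a \in N by rewrite -has_pred1 has_count; apply: leq_trans (h a); rewrite /= eqxx.
have hp := perm_to_rem ha.
case: (IH (rem a N)) => [x|R hR].
  have := h x; rewrite (perm_cnt x hp) /=; lia.
exists R; apply: perm_trans hp _; by rewrite /= perm_cons.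
Qed.

Lemma diff_ex (M N : seq A) : exists R, forall x, count_mem x R = count_mem x N - count_mem x M.
Proof.
elim: N => [|a N [R hR]]; first by exists [::].
case: (leqP (count_mem a M) (count_mem a N)) => h.
- exists (a :: R) => x /=; rewrite hR; case: eqP => [<-|_] /=; rewrite ?add0n ?add1n //.
  by rewrite subSn.
- exists R => x /=; rewrite hR; case: eqP => [<-|_] /=; rewrite ?add0n ?add1n //.
  have h1 : count_mem a N - count_mem a M = 0 by apply/eqP; rewrite subn_eq0 ltnW.
  have h2 : (count_mem a N).+1 - count_mem a M = 0 by apply/eqP; rewrite subn_eq0.
  by rewrite h1 h2.
Qed.

Lemma max_ex (M N : seq A) : exists U, forall x, count_mem x U = maxn (count_mem x M) (count_mem x N).
Proof.
case: (diff_ex M N) => R hR; exists (M ++ R) => x; rewrite count_cat hR; lia.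
Qed.

Lemma cnt_in (s : seq A) x : (0 < count_mem x s) = (x \in s).
Proof. by rewrite -has_pred1 has_count. Qed.

Lemma ldiv_iff (a b : qp) : ldiv a b <-> [/\ pvalid a, pvalid b, a.1 = b.1 & msub (Yl a.2) (Yl b.2)].
Proof.
split.
- case=> z [ez /ceq_iff [vab vb e hp]].
  move: vab; rewrite /pvalid /= => /valid_cat [va vz]; split => // x.
  by rewrite -(perm_cnt x hp) Yl_cat count_cat leq_addr.
- case=> va vb e hs; case: (msub_ex hs) => R hR.
  have hsrc y : y \in R -> src y = a.1.
    move=> hy; rewrite e; apply: (Yl_src vb); by rewrite (perm_mem hR) mem_cat hy orbT.
  case: (@Yl_surj (ptgt a) (map (invact a.2) R)) => [y /mapP [w hw ->]|zs [vz ez]].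
    exact: (invact_src va (hsrc _ hw)).
  exists (ptgt a, zs); split => //; apply/ceq_iff; split => //=.
    by apply/valid_cat.
  have eR : map (act a.2 \o invact a.2) R = R.
    rewrite -[RHS]map_id; apply/eq_in_map => w hw /=; exact: (act_invact va (hsrc _ hw)).
  by rewrite Yl_cat ez -map_comp eR perm_sym.
Qed.

Lemma msub_antisym (M N : seq A) : msub M N -> msub N M -> perm_eq M N.
Proof. by move=> h1 h2; apply: cnt_perm => x; apply/eqP; rewrite eqn_leq h1 h2. Qed.

Lemma Y_srcs (p : qp) y : pvalid p -> y \in Yl p.2 -> src y = p.1.
Proof. by move=> vp hy; exact: Yl_src vp hy. Qed.


Lemma j_inj s t : ceq (jmap s) (jmap t) -> s = t.
Proof.
case/ceq_inv => _ _ _ /= hp.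
by move/perm_mem/(_ t): hp; rewrite !mem_seq1 eqxx => /eqP.
Qed.

Lemma pres p q : ceq p q <-> pvalid p /\ clos_refl_sym_trans _ (step2 star) p q.
Proof.
split; case=> vp h; split => //.
- elim: h {vp} => {p q}.
  + by move=> p q /rstep_step2 [->|h]; [apply: rst_refl | apply: rst_step].
  + by move=> p; apply: rst_refl.
  + by move=> p q _ h; apply: rst_sym.
  + by move=> p q r _ h1 _ h2; apply: rst_trans h2.
- elim: h {vp} => {p q}.
  + by move=> p q /step2_rstep h; apply: rst_step.
  + by move=> p; apply: rst_refl.
  + by move=> p q _ h; apply: rst_sym.
  + by move=> p q r _ h1 _ h2; apply: rst_trans h2.
Qed.

Lemma isoper : exists C : nat, forall p q : qp, ceq p q ->
     exists n, n <= C * (plen p + plen q) ^ 2 /\ nsteps (step2 star) n p q.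
Proof.
exists 1 => p q /ceq_inv [vp vq e hp].
case: (perm_ceq_n vp vq e hp) => k [hk hn]; exists k; split => //.
apply: leq_trans hk _; rewrite mul1n -!mulnn /plen.
by apply: leq_mul; apply: leq_addr.
Qed.

Lemma inv_empty p : invertible p -> p.2 = [::].
Proof.
case=> vp [q [_ [_ [h _]]]]; move/ceq_size: h => /= /eqP.
by rewrite size_cat addn_eq0 size_eq0 => /andP [/eqP].
Qed.

Lemma empty_inv p : pvalid p -> p.2 = [::] -> invertible p.
Proof.
case: p => v l /= vp e; subst l; split => //; exists (v, [::]); do 2!split => //.
by split; apply: ceq_refl.
Qed.

Lemma no_inv p : invertible p -> ceq p (idp (psrc p)).
Proof.
move=> h; have e := inv_empty h; case: h => vp _.
by move: vp e; case: p => v l /= vp ->; apply: ceq_refl.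
Qed.

Lemma lcanc : left_cancellative X.
Proof.
move=> a b c eb ec /ceq_inv [vab vac _ hp]; rewrite /ptgt /psrc in eb ec.
move: vab vac; rewrite /pvalid /= => /valid_cat [va vb] /valid_cat [_ vc].
have vb' : pvalid b by rewrite /pvalid -eb.
have vc' : pvalid c by rewrite /pvalid -ec.
apply/ceq_iff; split => //; first by rewrite -eb -ec.
move: hp; rewrite !Yl_cat perm_cat2l => /(perm_map (invact a.2)).
have E (z : qp) : pvalid z -> end_from a.1 a.2 = z.1 -> map (invact a.2) (map (act a.2) (Yl z.2)) = Yl z.2.
  move=> vz ez; rewrite -map_comp -[RHS]map_id; apply/eq_in_map => w hw /=.
  apply: (invact_act va); rewrite (Yl_src vz hw); exact: esym ez.
by rewrite (E _ vb' eb) (E _ vc' ec).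
Qed.

Lemma lcm_ex (a b : qp) : pvalid a -> pvalid b -> a.1 = b.1 ->
  exists c, [/\ pvalid c, c.1 = a.1,
     (forall x, count_mem x (Yl c.2) = maxn (count_mem x (Yl a.2)) (count_mem x (Yl b.2)))
   & is_rlcm c a b].
Proof.
move=> va vb e; case: (max_ex (Yl a.2) (Yl b.2)) => U hU.
case: (@Yl_surj a.1 U) => [y hy|us [vu eu]].
  move: hy; rewrite -cnt_in hU leq_max !cnt_in => /orP [hy|hy].
    exact: Yl_src va hy.
  rewrite e; exact: Yl_src vb hy.
exists (a.1, us); split => //=; first by rewrite eu.
split.
- by apply/ldiv_iff; split => // x /=; rewrite eu hU leq_maxl.
- by apply/ldiv_iff; split => // x /=; rewrite eu hU leq_maxr.
- move=> d /ldiv_iff [_ vd ed h1] /ldiv_iff [_ _ _ h2].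
  by apply/ldiv_iff; split => // x /=; rewrite eu hU geq_max h1 h2.
Qed.

Lemma cond_lcm : conditional_rlcms X.
Proof.
move=> a b d /ldiv_iff [va vd e1 _] /ldiv_iff [vb _ e2 _].
case: (@lcm_ex a b va vb) => [|c [_ _ _ h]]; [congruence | by exists c].
Qed.

Lemma uniq_lcm : unique_rlcms X.
Proof.
move=> a b c c' [h1 h2 h3] [h1' h2' h3'].
case/ldiv_iff: (h3 _ h1' h2') => vc vc' e s1.
case/ldiv_iff: (h3' _ h1 h2) => _ _ _ s2.
by apply/ceq_iff; split => //; apply: msub_antisym.
Qed.

Lemma lcm_atoms x y : x <> y -> src x = src y ->
     ceq (pcat (jmap x) (jmap (star x y))) (pcat (jmap y) (jmap (star y x))) /\
     is_rlcm (pcat (jmap x) (jmap (star x y))) (jmap x) (jmap y).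
Proof.
move=> nxy sxy.
have vp : pvalid (pcat (jmap x) (jmap (star x y))) by rewrite /pvalid /= star_src.
have eY : Yl (pcat (jmap x) (jmap (star x y))).2 = [:: x; y] by rewrite /= lft_star.
split.
- split => //; apply: rst_step; apply: step2_rstep; split => //.
  exists [::], [::], x, y; do 3!split => //; by rewrite /pcat /= sxy.
- have vx : pvalid (jmap x) by [].
  have vy : pvalid (jmap y) by [].
  split.
  + apply/ldiv_iff; split => // z; rewrite eY /=; case: eqP; case: eqP => //=.
  + apply/ldiv_iff; split => // z; rewrite eY /=; case: eqP; case: eqP => //=.
  + move=> d /ldiv_iff [_ vd ed h1] /ldiv_iff [_ _ _ h2].
    apply/ldiv_iff; split => // z; rewrite eY; move: (h1 z) (h2 z) => /=.
    case: eqP => [<-|_]; case: eqP => [e|_] //=; by [rewrite e in nxy | rewrite addn0].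
Qed.

Lemma noeth : noetherian X.
Proof.
apply: (wf_incl _ _ (ltof _ (fun p : qp => size p.2))); last exact: well_founded_ltof.
move=> x y [vx [y' [y'' [vy' [vy'' [e1 [e2 [hc hn]]]]]]]].
rewrite /ltof; apply/ltP; move/ceq_size: hc => /= <-; rewrite !size_cat.
have ne (z : qp) : pvalid z -> ~ invertible z -> 0 < size z.2.
  move=> vz hz; case e : z.2 => //; exfalso; apply: hz; exact: empty_inv.
case: hn => [h|h].
- have := ne _ vy' h; lia.
- have := ne _ vy'' h; lia.
Qed.


Lemma sum1_split (T : Type) (sz : T -> nat) (fs : seq T) : sumn (map sz fs) = 1 ->
  exists i f, [/\ List.nth_error fs i = Some f, sz f = 1 &
    forall j g, j <> i -> List.nth_error fs j = Some g -> sz g = 0].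
Proof.
have Z (gs : seq T) : sumn (map sz gs) = 0 -> forall j g, List.nth_error gs j = Some g -> sz g = 0.
  elim: gs => [|a gs IH] /=; first by move=> _ [].
  move=> h [|j] g /=; first by case=> <-; lia.
  apply: IH; lia.
elim: fs => [|f fs IH] //= h.
case e : (sz f) => [|k].
- rewrite e add0n in h; case: (IH h) => i [g [h1 h2 h3]].
  exists i.+1, g; split => // [[|j]] g' ne /=; first by case=> <-.
  by apply: h3 => ej; apply: ne; rewrite ej.
- have k0 : k = 0 by lia.
  subst k; exists 0, f; split => // [[|j]] g ne //= hj.
  apply: (Z fs) hj; lia.
Qed.

Lemma inv_iff (p : qp) : pvalid p -> (invertible p <-> p.2 = [::]).
Proof. by move=> vp; split; [exact: inv_empty | exact: empty_inv]. Qed.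

Lemma atom_iff (p : qp) : is_atom p <-> exists s, ceq p (jmap s).
Proof.
split.
- case: p => v l [vp hat].
  have fac1 : factorization (v, l) [:: (v, l)].
    split; first by constructor.
    split => //; exists (v, l), [::]; split => //=; rewrite cats0; exact: ceq_refl.
  case: (hat _ fac1) => [[|[|i]]] [[f [/= [ef] hf]] _] //; subst f.
  case: l vp hf hat {fac1} => [|x [|y r]] vp hf hat.
  + by case: hf; apply: empty_inv.
  + by exists x; case: vp => /= <- _; apply: ceq_refl; split.
  + have fac2 : factorization (v, [:: x, y & r]) [:: (v, [:: x]); (tgt x, y :: r)].
      case: vp => /= sx [sy vr]; split.
        by constructor; [split | constructor; [split|constructor]].
      split => //; exists (v, [:: x]), [:: (tgt x, y :: r)]; split => //=.
      rewrite cats0; apply: ceq_refl; by split.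
    case: (hat _ fac2) => i [[f [hfi hf']] hall].
    case: i hfi hall => [|[|i]] /= hfi hall.
    * by have /inv_empty := hall 1 _ (fun e => ltac:(discriminate)) erefl.
    * by have /inv_empty := hall 0 _ (fun e => ltac:(discriminate)) erefl.
    * by case: i hfi {hall}.
- case=> s hs; have [vp _ e hp] := ceq_inv hs.
  have ep : p = jmap s.
    move: (perm_size hp) (perm_mem hp) vp e; rewrite size_Yl; clear hs hp.
    case: p => v [|x [|y r]] //= _ hm vp e.
    move: (hm x); rewrite !mem_seq1 eqxx => /esym/eqP ->; by rewrite e.
  subst p; split => // fs [hv [hc [f [fs' [efs hpr]]]]].
  have := ceq_size hpr; rewrite /= size_flatten /shape -map_comp => h1.
  case: (sum1_split h1) => i [g [hg hs1 hoth]].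
  exists i; split.
  + exists g; split => // /inv_empty /= hg0; by rewrite /= hg0 in hs1.
  + move=> j g' ne hj; apply: empty_inv.
      by move/List.Forall_forall: hv; apply; apply: List.nth_error_In hj.
    by apply/eqP; rewrite -size_eq0; apply/eqP; apply: (hoth j).
Qed.


Lemma act_cat a b z : act (a ++ b) z = act a (act b z).
Proof. by elim: a => //= x a ->. Qed.

Lemma cnt_le1 (s : seq A) x : uniq s -> count_mem x s <= 1.
Proof. by move=> u; rewrite count_uniq_mem // leq_b1. Qed.

Lemma Ecl_uniq p : Ecl p -> pvalid p /\ uniq (Yl p.2).
Proof.
elim=> {p}.
- by move=> s p /ceq_inv [vp _ _ hp]; rewrite (perm_uniq hp).
- by move=> v p /ceq_inv [vp _ _ hp]; rewrite (perm_uniq hp).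
- move=> a b c _ [va ua] _ [vb ub] [hac hbc hmin].
  case/ldiv_iff: (hac) => _ vc e1 _; case/ldiv_iff: (hbc) => _ _ e2 _.
  case: (@lcm_ex a b va vb) => [|u [vu eu hu [hau hbu _]]]; first congruence.
  case/ldiv_iff: (hmin _ hau hbu) => _ _ _ hs.
  split => //; apply: count_mem_uniq => x.
  have h : count_mem x (Yl c.2) <= 1.
    apply: leq_trans (hs x) _; rewrite hu geq_max !cnt_le1 //.
  rewrite -cnt_in; move: h; case: (count_mem x _) => [|[|]] //.
Qed.

Lemma uniq_Ecl p : pvalid p -> uniq (Yl p.2) -> Ecl p.
Proof.
move e : (Yl p.2) => L; elim: L p e => [|y L IH] p e vp u.
  have e2 : p.2 = [::] by apply/eqP; rewrite -size_eq0 -size_Yl e.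
  apply: (@Ecl_id X p.1); move: vp e2; case: p {e} => v l /= vp ->; exact: ceq_refl.
have sy : src y = p.1 by apply: (Yl_src vp); rewrite e mem_head.
case: (@Yl_surj p.1 L) => [w hw|l [vl el]]; first by apply: (Yl_src vp); rewrite e inE hw orbT.
case/andP: u => ny uL.
have Ea : Ecl (p.1, l) by apply: IH.
have Eb : Ecl (jmap y) by apply: (@Ecl_gen X y); apply: ceq_refl.
apply: (Ecl_lcm Ea Eb); split.
- by apply/ldiv_iff; split => // x /=; rewrite e el /= leq_addl.
- apply/ldiv_iff; split => //= x; rewrite e /=; case: eqP => //= _; exact: leq_addr.
- move=> d /ldiv_iff [_ vd ed h1] /ldiv_iff [_ _ _ h2].
  apply/ldiv_iff; split => //.
  move=> x; rewrite e /=; move: (h1 x) (h2 x); rewrite /= el.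
  case: eqP => [<-|_] //= _; rewrite addn0.
  by have -> : count_mem y L = 0 by apply/count_memPn.
Qed.

Lemma Ecl_iff p : Ecl p <-> pvalid p /\ uniq (Yl p.2).
Proof. by split; [exact: Ecl_uniq | case; exact: uniq_Ecl]. Qed.


Lemma Ssharp_Ecl f : Ecl f -> Ssharp (@Ecl X) f.
Proof.
move=> hf; right; exists f, (ptgt f, [::]); split => //; split; first exact: empty_inv.
split => //; case/Ecl_uniq: hf; case: f => v l /= vf _; rewrite /pcat /= cats0; exact: ceq_refl.
Qed.

Lemma greedy_Ecl (f g : qp) : pvalid f -> ptgt f = g.1 ->
  (forall w, w \in Yl g.2 -> act f.2 w \in Yl f.2) -> greedy (@Ecl X) f g.
Proof.
move=> vf efg hin s c /Ecl_uniq [vs us] vc ec /ldiv_iff [_ vcfg es hs].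
have vcf : pvalid (pcat c f).
  by move: vcfg; rewrite /pvalid /= => /valid_cat [].
apply/ldiv_iff; split => // x; have := hs x; rewrite /= Yl_cat count_cat.
case: (boolP (x \in map (act (c.2 ++ f.2)) (Yl g.2))) => hx.
- move=> _; apply: leq_trans (cnt_le1 x us) _; rewrite cnt_in Yl_cat mem_cat.
  case/mapP: hx => w hw ->; rewrite act_cat; apply/orP; right.
  by apply: map_f; apply: hin.
- by rewrite (count_memPn hx) addn0.
Qed.

Lemma nf_empty p : pvalid p -> p.2 = [::] ->
  exists fs, fs <> [::] /\ s_normal (@Ecl X) fs /\ product_is fs p.
Proof.
move=> vp e; exists [:: p]; split => //; split.
  split; first by constructor.
  split => //; split => //.
  by apply: List.Forall_cons; [left; exact: empty_inv | constructor].
exists p, [::]; split => //=; rewrite cats0; case: (p) vp => v l vp; exact: ceq_refl.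
Qed.

Lemma garside_Ecl : garside (@Ecl X).
Proof.
move=> p; move: {2}(size p.2) (leqnn (size p.2)) => n; elim: n p => [|n IH] p hs vp.
  have e : p.2 = [::] by apply/eqP; rewrite -size_eq0 -leqn0.
  exact: nf_empty.
case e0 : (p.2) => [|x0 l0]; first exact: nf_empty.
set M := Yl p.2.
have hsub : msub (undup M) M.
  by move=> x; rewrite count_uniq_mem ?undup_uniq // mem_undup -cnt_in; case: (count_mem x M).
case: (msub_ex hsub) => R hR.
have srcM y : y \in M -> src y = p.1 by move=> hy; exact: (Yl_src vp hy).
have srcR y : y \in R -> src y = p.1.
  by move=> hy; apply: srcM; rewrite (perm_mem hR) mem_cat hy orbT.
case: (@Yl_surj p.1 (undup M)) => [y|fl [vf ef]]; first by rewrite mem_undup; exact: srcM.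
set f := (p.1, fl).
case: (@Yl_surj (ptgt f) (map (invact fl) R)) => [y /mapP [w hw ->]|gl [vg eg]].
  exact: (invact_src vf (srcR _ hw)).
set g := (ptgt f, gl).
have eR : map (act fl) (map (invact fl) R) = R.
  rewrite -map_comp -[RHS]map_id; apply/eq_in_map => w hw /=; exact: (act_invact vf (srcR _ hw)).
have sz : size gl < size p.2.
  rewrite -(size_Yl gl) eg size_map -(size_Yl p.2) -/M (perm_size hR) size_cat -add1n leq_add2r.
  rewrite lt0n size_eq0; apply/eqP => h.
  have : x0 \in undup M by rewrite mem_undup /M e0 mem_head.
  by rewrite h.
case: (IH g _ vg) => [|gsl [ne [[hv [hc [hS hadj]]] [g1 [gsl' [egs hpr]]]]]].
  by rewrite -ltnS; apply: leq_trans hs.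
subst gsl.
have [vfl vg' e1 hpg] := ceq_inv hpr.
exists (f :: g1 :: gsl'); split => //; split.
  split; first by apply: List.Forall_cons; [exact: vf | exact: hv].
  split; first by split => //.
  split; first by apply: List.Forall_cons => //; apply: Ssharp_Ecl; apply: uniq_Ecl => //=; rewrite ef undup_uniq.
  split => //; apply: greedy_Ecl => // w hw.
  rewrite /= ef mem_undup (perm_mem hR) mem_cat; apply/orP; right.
  rewrite -eR; apply: map_f; rewrite -eg -(perm_mem hpg) /= Yl_cat mem_cat hw //.
exists f, (g1 :: gsl'); split => //; apply/ceq_iff; split => //.
- have e1' : g1.1 = end_from p.1 fl := e1.
  apply/valid_cat; split => //; rewrite /pvalid /= e1' in vfl; exact: vfl.
- rewrite Yl_cat ef; apply: perm_trans (_ : perm_eq (undup M ++ R) M); last by rewrite perm_sym.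
  rewrite perm_cat2l -eR -eg; exact: perm_map.
Qed.


Lemma ldiv_ceq s d d' : ldiv s d -> ceq d d' -> ldiv s d'.
Proof. by case=> z [ez h] h'; exists z; split => //; apply: ceq_trans h'. Qed.

Lemma head_div (S : qfamily X) s : S s -> forall fs f c,
  adj_all (greedy S) (f :: fs) -> chained (f :: fs) -> List.Forall pvalid (f :: fs) ->
  pvalid c -> ptgt c = psrc f ->
  ldiv s (c.1, c.2 ++ flatten (map snd (f :: fs))) -> ldiv s (pcat c f).
Proof.
move=> Ss; elim=> [|g fs IH] f c /=.
  by move=> _ _ _ _ _; rewrite cats0.
move=> [gr ad] [ch chs] hv vc ec hd.
have vf : pvalid f by inversion hv.
have hv' : List.Forall pvalid (g :: fs) by inversion hv.
have vcf : pvalid (pcat c f).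
  rewrite /pvalid /=; apply/valid_cat; split => //; rewrite /ptgt /psrc in ec; by rewrite ec.
apply: (gr s c Ss vc ec).
have := IH g (pcat c f) ad chs hv' vcf; rewrite /pcat /= -catA; apply.
  rewrite /ptgt /= end_cat; rewrite /ptgt /psrc in ec ch; by rewrite ec.
by move: hd; rewrite /= catA.
Qed.

Lemma Ecl_min (S : qfamily X) : family_of_elements S -> garside S ->
  (forall s, S (jmap s)) -> (forall v, S (idp v)) -> forall p, Ecl p -> S p.
Proof.
move=> hF hG hj hid p; elim=> {p}.
- by move=> s p h; apply: hF (hj s); apply: ceq_sym.
- by move=> v p h; apply: hF (hid v); apply: ceq_sym.
- move=> a b c _ Sa _ Sb [hac hbc hmin].
  case/ldiv_iff: (hac) => _ vc _ _.
  case: (hG c vc) => fs [_ [[hv [hc [hS hadj]]] [f [fs' [efs hpr]]]]]; subst fs.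
  have vf : pvalid f by inversion hv.
  have ef1 : f.1 = c.1 by case: (ceq_inv hpr).
  have hd (s : qp) : S s -> ldiv s c -> ldiv s f.
    move=> Ss hs; have := @head_div S s Ss fs' f (idp f.1) hadj hc hv I erefl.
    rewrite /pcat /= -surjective_pairing; apply.
    by apply: ldiv_ceq hs _; apply: ceq_sym.
  have hcf : ldiv c f by apply: hmin; apply: hd.
  have hfc : ldiv f c by exists (ptgt f, flatten (map snd fs')); split.
  case/ldiv_iff: hcf => _ _ _ s1; case/ldiv_iff: hfc => _ _ e s2.
  have cfc : ceq f c by apply/ceq_iff; split => //; apply: msub_antisym.
  have hSf : Ssharp S f by inversion hS.
  case: hSf => [hi|[s [e' [Ss [hi [ese hse]]]]]].
  + have ef : f.2 = [::] by apply: inv_empty.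
    case: (ceq_inv cfc) => _ _ _ hp; rewrite ef in hp.
    by apply: hF (hid c.1); apply/ceq_iff; split.
  + have ee : e'.2 = [::] by apply: inv_empty.
    have vs : pvalid s by case: (ceq_inv hse) => /=; rewrite /pvalid /= ee cats0.
    apply: hF Ss; apply: ceq_trans (ceq_trans hse cfc).
    by move: vs; rewrite /pcat ee cats0; case: (s) => ? ? /=; apply: ceq_refl.
Qed.

End Model.

Theorem theorem5p7 (X : qsys) (star : arr X -> arr X -> arr X) :
  inhabited (vert X) ->
  yang_baxter_map X -> yb_involutive X -> left_nondegenerate X ->
  star_spec star ->
  (* j is injective *)
  (forall s t : arr X, ceq (jmap s) (jmap t) -> s = t) /\
  (* (i) presentation and quadratic isoperimetric inequality *)
  ((forall p q : qpath X, ceq p q <->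
       pvalid p /\ clos_refl_sym_trans (qpath X) (step2 star) p q) /\
   exists C : nat, forall p q : qpath X, ceq p q ->
     exists n, n <= C * (plen p + plen q) ^ 2 /\ nsteps (step2 star) n p q) /\
  (* (ii) no nontrivial invertible elements *)
  (forall p : qpath X, invertible p -> ceq p (idp (psrc p))) /\
  (* (iii) left-cancellative *)
  left_cancellative X /\
  (* (iv) unique conditional right-lcms, complement given by star *)
  (conditional_rlcms X /\ unique_rlcms X /\
   forall x y : arr X, x <> y -> src x = src y ->
     ceq (pcat (jmap x) (jmap (star x y))) (pcat (jmap y) (jmap (star y x))) /\
     is_rlcm (pcat (jmap x) (jmap (star x y))) (jmap x) (jmap y)) /\
  (* (v) Noetherian *)
  noetherian X /\
  (* (vi) atoms are exactly j(A) *)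
  (forall p : qpath X, is_atom p <-> exists s, ceq p (jmap s)) /\
  (* (vii) E is a Garside qfamily, and the smallest one containing j(A) and
     the identities *)
  (garside (@Ecl X) /\
   (forall s : arr X, Ecl (jmap s)) /\ (forall v : vert X, Ecl (idp v)) /\
   forall S : qfamily X, family_of_elements S -> garside S ->
     (forall s : arr X, S (jmap s)) -> (forall v : vert X, S (idp v)) ->
     forall p : qpath X, Ecl p -> S p).

Proof.
move=> _ [HM HB] HI HL HS.
split; first by move=> s t; eapply j_inj; eauto.
split.
  split; first by move=> p q; eapply pres; eauto.
  by eapply isoper; eauto.
split; first by move=> p; eapply no_inv; eauto.
split; first by eapply lcanc; eauto.
split.
  split; first by eapply cond_lcm; eauto.
  split; first by eapply uniq_lcm; eauto.
  by move=> x y; eapply lcm_atoms; eauto.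
split; first by eapply noeth; eauto.
split; first by move=> p; eapply atom_iff; eauto.
split; first by eapply garside_Ecl; eauto.
split; first by move=> s; apply: (@Ecl_gen X s); apply: ceq_refl.
split; first by move=> v; apply: (@Ecl_id X v); apply: ceq_refl.
by move=> S hF hG hj hid p; eapply Ecl_min; eauto.
Qed.
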